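(* Let $F:[0,\infty)\to\mathbb{R}$ be $C^{1,1}$ with $F'(0)=0$ and let $\Sigma=\{(w,F(|w|)):w\in\mathbb{R}^2\}\subset\mathbb{R}^3$. Then every compact subset of $(\Sigma,d_{\mathbb{H}})$ bi-Lipschitz embeds in some Euclidean space $\mathbb{R}^n$.
   Context: For $w=(x,y,z)$, $w'=(x',y',z')$, $d_{\mathbb{H}}(w,w')=|x-x'|+|y-y'|+|z-z'+\tfrac12(xy'-x'y)|^{1/2}$. $(A,d_{\mathbb{H}})$ bi-Lipschitz embeds in $\mathbb{R}^n$ if there are $L\ge1$ and $f:A\to\mathbb{R}^n$ with $L^{-1}d_{\mathbb{H}}(a,b)\le|f(a)-f(b)|\le Ld_{\mathbb{H}}(a,b)$ for all $a,b\in A$. *)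

(* Defs.v *)
From Stdlib Require Import Reals Lra List.
Open Scope R_scope.

(* Points of R^3 = Heisenberg group in exponential coordinates. *)
Definition point : Type := (R * R * R)%type.

Definition dH (w w' : point) : R :=
  let '(x, y, z) := w in
  let '(x', y', z') := w' in
  Rabs (x - x') + Rabs (y - y')
  + sqrt (Rabs (z - z' + / 2 * (x * y' - x' * y))).

Definition has_deriv_nonneg (F : R -> R) (t d : R) : Prop :=
  forall eps, 0 < eps -> exists delta, 0 < delta /\
    forall s, 0 <= s -> Rabs (s - t) < delta ->
      Rabs (F s - F t - d * (s - t)) <= eps * Rabs (s - t).

(* F : [0,oo) -> R is C^{1,1}: differentiable on [0,oo) (one-sided at 0)
   with Lipschitz derivative F'. Only values of F on [0,oo) matter. *)
Definition C11_nonneg (F F' : R -> R) : Prop :=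
  (forall t, 0 <= t -> has_deriv_nonneg F t (F' t)) /\
  exists K, 0 <= K /\
    forall s t, 0 <= s -> 0 <= t -> Rabs (F' s - F' t) <= K * Rabs (s - t).

Definition Sigma (F : R -> R) (p : point) : Prop :=
  let '(x, y, z) := p in z = F (sqrt (x * x + y * y)).

Definition dH_open (U : point -> Prop) : Prop :=
  forall p, U p -> exists r, 0 < r /\ forall q, dH p q < r -> U q.

Definition dH_compact (A : point -> Prop) : Prop :=
  forall (I : Type) (U : I -> point -> Prop),
    (forall i, dH_open (U i)) ->
    (forall a, A a -> exists i, U i a) ->
    exists l : list I, forall a, A a -> exists i, In i l /\ U i a.

(* Euclidean distance in R^n, vectors represented as nat -> R
   (only coordinates 0..n-1 are used). *)
Fixpoint sumsq (n : nat) (u v : nat -> R) : R :=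
  match n with
  | O => 0
  | S m => sumsq m u v + (u m - v m) ^ 2
  end.

Definition euclid_dist (n : nat) (u v : nat -> R) : R := sqrt (sumsq n u v).

Definition biLip_embeds (A : point -> Prop) (n : nat) : Prop :=
  exists (L : R) (f : point -> nat -> R), 1 <= L /\
    forall a b, A a -> A b ->
      / L * dH a b <= euclid_dist n (f a) (f b) /\
      euclid_dist n (f a) (f b) <= L * dH a b.

(* Main.v *)
Require Import Defs.
From Stdlib Require Import Reals Lra Lia.
From Coquelicot Require Import Coquelicot.
Open Scope R_scope.

Fixpoint psum (a : nat -> R) (m : nat) : R :=
  match m with O => 0 | S m' => psum a m' + a m' end.

Lemma psum_sum_f (a : nat -> R) n : psum a (S n) = sum_f_R0 a n.
Proof. induction n; simpl in *; [lra|]. rewrite <- IHn. simpl. lra. Qed.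

Definition ndist (i j : nat) : nat := ((i - j) + (j - i))%nat.

Lemma head_bound (a : nat -> R) (i0 : nat) (A q : R) :
  0 <= q < 1 -> 0 <= A ->
  (forall i, (i < i0)%nat -> Rabs (a i) <= A * q ^ (i0 - i)) ->
  forall m, (m <= i0)%nat -> Rabs (psum a m) <= A * q ^ (i0 - m) * (q / (1 - q)).
Proof.
  intros Hq HA H. induction m; intros Hm.
  - simpl. rewrite Rabs_R0. apply Rmult_le_pos; [apply Rmult_le_pos; [lra| apply pow_le; lra]|].
    apply Rmult_le_pos; [lra| apply Rlt_le, Rinv_0_lt_compat; lra].
  - simpl. eapply Rle_trans; [apply Rabs_triang|].
    specialize (IHm ltac:(lia)). specialize (H m ltac:(lia)).
    replace (i0 - m)%nat with (S (i0 - S m)) in IHm, H by lia.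
    simpl in IHm, H.
    assert (Hp : 0 <= q ^ (i0 - S m)) by (apply pow_le; lra).
    set (t := q ^ (i0 - S m)) in *.
    assert (E: A * (q * t) * (q / (1 - q)) + A * (q * t) = A * t * (q / (1 - q))).
    { field. lra. }
    lra.
Qed.

Lemma split_bound (a : nat -> R) (i0 : nat) (A q : R) :
  0 <= q < 1 -> 0 <= A ->
  (forall i, i <> i0 -> Rabs (a i) <= A * q ^ (ndist i i0)) ->
  ex_series a /\ Rabs (Series a - a i0) <= 2 * A * q / (1 - q).
Proof.
  intros Hq HA H.
  set (t := fun k => a (S i0 + k)%nat).
  assert (Ht : forall k, Rabs (t k) <= A * q * q ^ k).
  { intro k. unfold t. eapply Rle_trans; [apply H; lia|]. unfold ndist.
    replace ((S i0 + k - i0) + (i0 - (S i0 + k)))%nat with (S k) by lia.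
    simpl. lra. }
  assert (Hgeom : ex_series (fun k => A * q * q ^ k)).
  { apply (ex_series_scal_l (V := R_NormedModule)). apply ex_series_geom. rewrite Rabs_pos_eq; lra. }
  assert (Het : ex_series t).
  { apply (ex_series_le (V := R_CompleteNormedModule)) with (b := fun k => A * q * q ^ k); auto. }
  assert (Hea : ex_series a).
  { apply (ex_series_incr_n a (S i0)). exact Het. }
  split; [exact Hea|].
  rewrite (Series_incr_n a (S i0)) by (auto; lia). simpl pred.
  rewrite <- psum_sum_f. simpl psum.
  fold t.
  assert (Hh : Rabs (psum a i0) <= A * q / (1 - q)).
  { eapply Rle_trans; [apply (head_bound a i0 A q Hq HA)|].
    - intros i Hi. eapply Rle_trans; [apply H; lia|]. unfold ndist. replace ((i - i0) + (i0 - i))%nat with (i0 - i)%nat by lia. lra.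
    - lia.
    - rewrite Nat.sub_diag. simpl. right. field. lra. }
  assert (Hta : ex_series (fun k => Rabs (t k))).
  { apply (ex_series_le (V := R_CompleteNormedModule)) with (b := fun k => A * q * q ^ k); auto.
    intro n. change (norm (Rabs (t n))) with (Rabs (Rabs (t n))). rewrite Rabs_Rabsolu. auto. }
  assert (Hs : Rabs (Series t) <= A * q / (1 - q)).
  { eapply Rle_trans; [apply Series_Rabs; exact Hta|].
    eapply Rle_trans; [apply Series_le with (b := fun k => A * q * q ^ k)|].
    - intro n; split; [apply Rabs_pos| apply Ht].
    - exact Hgeom.
    - rewrite Series_scal_l, Series_geom by (rewrite Rabs_pos_eq; lra). right. field. lra. }
  replace (psum a i0 + a i0 + Series t - a i0) with (psum a i0 + Series t) by ring.
  eapply Rle_trans; [apply Rabs_triang|]. 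
  replace (2 * A * q / (1 - q)) with (A * q / (1 - q) + A * q / (1 - q)) by (field; lra). lra.
Qed.

Lemma full_bound (a : nat -> R) (i0 : nat) (A q : R) :
  0 <= q < 1 -> 0 <= A ->
  (forall i, Rabs (a i) <= A * q ^ (ndist i i0)) ->
  ex_series a /\ Rabs (Series a) <= 2 * A / (1 - q).
Proof.
  intros Hq HA H.
  destruct (split_bound a i0 A q Hq HA (fun i _ => H i)) as [He Hb].
  split; auto.
  specialize (H i0). unfold ndist in H. rewrite Nat.sub_diag in H. simpl in H.
  replace (Series a) with ((Series a - a i0) + a i0) by ring.
  eapply Rle_trans; [apply Rabs_triang|].
  assert (E : 2 * A / (1 - q) = 2 * A + 2 * A * q / (1 - q)) by (field; lra).
  rewrite E. lra.
Qed.

Definition sqv (u : R * R) : R * R :=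
  (fst u * fst u - snd u * snd u, 2 * fst u * snd u).
Fixpoint zk (k : nat) (u : R * R) : R * R :=
  match k with O => u | S k' => sqv (zk k' u) end.
Definition nrm2 (u : R * R) := fst u * fst u + snd u * snd u.
Definition dist2 (u v : R * R) := (fst u - fst v) * (fst u - fst v) + (snd u - snd v) * (snd u - snd v).

Lemma nrm2_sqv u : nrm2 (sqv u) = nrm2 u * nrm2 u.
Proof. unfold nrm2, sqv; simpl; ring. Qed.

Lemma nrm2_zk k u : nrm2 u = 1 -> nrm2 (zk k u) = 1.
Proof. intro H; induction k; simpl; auto. rewrite nrm2_sqv, IHk; ring. Qed.

Lemma dist2_sqv u v : dist2 (sqv u) (sqv v) = dist2 u v * (2 * nrm2 u + 2 * nrm2 v - dist2 u v).
Proof. unfold dist2, nrm2, sqv; simpl; ring. Qed.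

Lemma dist2_nonneg u v : 0 <= dist2 u v.
Proof. unfold dist2. pose proof (Rle_0_sqr (fst u - fst v)). pose proof (Rle_0_sqr (snd u - snd v)). unfold Rsqr in *. lra. Qed.

Definition Ck (k : nat) u v := dist2 (zk k u) (zk k v).

Lemma Ck_S k u v : nrm2 u = 1 -> nrm2 v = 1 -> Ck (S k) u v = Ck k u v * (4 - Ck k u v).
Proof. intros Hu Hv. unfold Ck; simpl. rewrite dist2_sqv, !nrm2_zk; auto. ring. Qed.

Lemma Ck_le4 k u v : nrm2 u = 1 -> nrm2 v = 1 -> Ck k u v <= 4.
Proof.
  intros Hu Hv. destruct k.
  - unfold Ck, dist2, nrm2 in *; simpl. destruct u as [a b]; destruct v as [c d]; simpl in *.
    pose proof (Rle_0_sqr (a + c)). pose proof (Rle_0_sqr (b + d)). unfold Rsqr in *. nra.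
  - rewrite Ck_S; auto. pose proof (Rle_0_sqr (Ck k u v - 2)). unfold Rsqr in *. nra.
Qed.

Lemma Ck_nonneg k u v : 0 <= Ck k u v.
Proof. apply dist2_nonneg. Qed.

Definition ck k u v := sqrt (Ck k u v).

Lemma ck_le2 k u v : nrm2 u = 1 -> nrm2 v = 1 -> ck k u v <= 2.
Proof.
  intros. unfold ck. rewrite <- sqrt_square with 2 by lra. apply sqrt_le_1_alt.
  pose proof (Ck_le4 k u v H H0). lra.
Qed.

Lemma ck_nonneg k u v : 0 <= ck k u v.
Proof. apply sqrt_pos. Qed.

Lemma ck_S_sq k u v : nrm2 u = 1 -> nrm2 v = 1 ->
  ck (S k) u v * ck (S k) u v = ck k u v * ck k u v * (4 - ck k u v * ck k u v).
Proof.
  intros. unfold ck. rewrite !sqrt_sqrt; try apply Ck_nonneg. apply Ck_S; auto.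
Qed.

Lemma ck_upper k u v : nrm2 u = 1 -> nrm2 v = 1 -> ck k u v <= 2 ^ k * ck 0 u v.
Proof.
  intros Hu Hv. induction k.
  - simpl; lra.
  - pose proof (ck_S_sq k u v Hu Hv). pose proof (ck_nonneg k u v). pose proof (ck_nonneg (S k) u v).
    simpl.
    assert (ck (S k) u v <= 2 * ck k u v) by nra.
    nra.
Qed.

Lemma ck_lower_step k u v : nrm2 u = 1 -> nrm2 v = 1 ->
  2 * ck k u v - ck k u v ^ 3 / 2 <= ck (S k) u v.
Proof.
  intros Hu Hv. pose proof (ck_S_sq k u v Hu Hv). pose proof (ck_nonneg k u v).
  pose proof (ck_nonneg (S k) u v). pose proof (ck_le2 k u v Hu Hv).
  set (a := ck k u v) in *. set (b := ck (S k) u v) in *.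
  destruct (Rle_dec (2 * a - a ^ 3 / 2) 0) as [Hn|Hp]; [lra|].
  apply Rnot_le_lt in Hp.
  assert ((2 * a - a ^ 3 / 2) * (2 * a - a ^ 3 / 2) <= b * b) by nra.
  nra.
Qed.

Lemma ck_lower k u v : nrm2 u = 1 -> nrm2 v = 1 ->
  2 ^ k * ck 0 u v <= / 2 ->
  2 ^ k * ck 0 u v * (1 - (2 ^ k * ck 0 u v) ^ 2 / 12) <= ck k u v.
Proof.
  intros Hu Hv. induction k; intros Hk.
  - simpl in *. pose proof (ck_nonneg 0 u v). nra.
  - simpl in Hk |- *. 
    pose proof (ck_nonneg 0 u v). pose proof (pow_lt 2 k ltac:(lra)).
    specialize (IHk ltac:(nra)).
    pose proof (ck_upper k u v Hu Hv). pose proof (ck_lower_step k u v Hu Hv).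
    pose proof (ck_nonneg k u v).
    set (y := 2 ^ k * ck 0 u v) in *. set (a := ck k u v) in *.
    replace (2 * 2 ^ k * ck 0 u v) with (2 * y) by (unfold y; ring).
    assert (a ^ 3 <= y ^ 3) by (apply pow_incr; lra).
    assert (0 <= y) by (unfold y; nra).
    nra.
Qed.

Lemma pow_decr (x : R) (m n : nat) : 0 < x <= 1 -> (m <= n)%nat -> x ^ n <= x ^ m.
Proof.
  intros Hx Hmn. replace n with (m + (n - m))%nat by lia. rewrite pow_add.
  pose proof (pow_le x m ltac:(lra)). assert (x ^ (n - m) <= 1) by (rewrite <- (pow1 (n - m)); apply pow_incr; lra).
  pose proof (pow_le x (n-m) ltac:(lra)). nra.
Qed.

Definition s2 : R := / sqrt 2.
Definition qq : R := s2 ^ 16.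

Lemma sqrt2_pos : 0 < sqrt 2.
Proof. apply sqrt_lt_R0; lra. Qed.

Lemma s2_sq : s2 * s2 = / 2.
Proof. unfold s2. rewrite <- Rinv_mult, sqrt_sqrt; lra. Qed.

Lemma s2_pos : 0 < s2.
Proof. unfold s2. apply Rinv_0_lt_compat, sqrt2_pos. Qed.

Lemma s2_lt1 : s2 < 1.
Proof. pose proof s2_sq. pose proof s2_pos. nra. Qed.

Lemma qq_val : qq = / 256.
Proof.
  unfold qq. replace 16%nat with (2 * 8)%nat by reflexivity. rewrite pow_mult.
  simpl pow. rewrite Rmult_1_r, s2_sq. field.
Qed.

Lemma s2_pow_sq J : s2 ^ J * s2 ^ J * 2 ^ J = 1.
Proof.
  rewrite <- Rpow_mult_distr, s2_sq, <- Rpow_mult_distr.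
  replace (/2 * 2) with 1 by field. apply pow1.
Qed.

Lemma s2_pow_pos k : 0 < s2 ^ k.
Proof. apply pow_lt, s2_pos. Qed.

Lemma INR_le_pow2 n : INR n <= 2 ^ n.
Proof.
  induction n; [simpl; lra|]. rewrite S_INR. simpl pow. pose proof (pow_le 2 n ltac:(lra)).
  assert (1 <= 2 ^ n) by (apply pow_R1_Rle; lra). lra.
Qed.

Lemma find_J (c : R) : 0 < c <= / 2 -> exists J, 2 ^ J * c <= / 2 /\ / 2 < 2 ^ (S J) * c.
Proof.
  intros Hc. destruct (INR_archimed c 1 ltac:(lra)) as [n Hn].
  assert (H : / 2 < 2 ^ n * c).
  { pose proof (INR_le_pow2 n). nra. }
  clear Hn. induction n.
  - simpl in H. lra.
  - destruct (Rlt_dec (/2) (2 ^ n * c)) as [h|h].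
    + apply IHn; auto.
    + exists n. split; lra.
Qed.

Definition good_J (u v : R * R) (J : nat) : Prop :=
  47 / 192 <= ck J u v /\ sqrt (ck 0 u v) / 2 <= s2 ^ J /\ s2 ^ J <= 2 * sqrt (ck 0 u v) /\
  forall k, s2 ^ k * ck k u v <= 2 * s2 ^ J * s2 ^ (ndist k J).

Lemma good_J_exists u v : nrm2 u = 1 -> nrm2 v = 1 -> 0 < ck 0 u v -> exists J, good_J u v J.
Proof.
  intros Hu Hv Hc. set (c := ck 0 u v) in *.
  pose proof (ck_le2 0 u v Hu Hv) as Hc2. fold c in Hc2.
  destruct (Rle_dec c (/2)) as [Hs|Hb].
  - destruct (find_J c ltac:(lra)) as [J [HJ1 HJ2]].
    exists J. unfold good_J; fold c. simpl in HJ2. rewrite Rmult_assoc in HJ2.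
    pose proof (s2_pow_sq J) as E. pose proof (s2_pow_pos J) as Pj.
    pose proof (pow_lt 2 J ltac:(lra)) as P2.
    assert (Hsq : s2 ^ J * s2 ^ J * (2 ^ J * c) = c) by (rewrite <- Rmult_assoc, E; ring).
    split; [|split; [|split]].
    + pose proof (ck_lower J u v Hu Hv HJ1). fold c in H.
      set (y := 2 ^ J * c) in *.
      assert (Hy : / 4 <= y) by lra. assert (Hy2 : y ^ 2 <= / 4) by nra.
      assert (47 / 48 <= 1 - y ^ 2 / 12) by lra.
      assert (/4 * (47/48) <= y * (1 - y ^ 2 / 12)) by (apply Rmult_le_compat; lra).
      lra.
    + assert (sqrt c <= 2 * s2 ^ J); [|lra].
      rewrite <- (sqrt_square (2 * s2 ^ J)) by lra. apply sqrt_le_1_alt.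
      assert (0 <= s2 ^ J * s2 ^ J) by nra.
      assert (s2 ^ J * s2 ^ J * (2 ^ J * c) <= s2 ^ J * s2 ^ J * (/2)) by (apply Rmult_le_compat_l; lra).
      nra.
    + rewrite <- (sqrt_square (s2 ^ J)) by lra.
      replace (2 * sqrt c) with (sqrt (2 * 2 * c)) by
        (rewrite sqrt_mult_alt, sqrt_square by lra; reflexivity).
      apply sqrt_le_1_alt.
      assert (0 <= s2 ^ J * s2 ^ J) by nra.
      assert (s2 ^ J * s2 ^ J * (/4) <= s2 ^ J * s2 ^ J * (2 ^ J * c)) by (apply Rmult_le_compat_l; lra).
      nra.
    + intro k. destruct (Compare_dec.le_lt_dec k J) as [Hk|Hk].
      * pose proof (ck_upper k u v Hu Hv). fold c in H.
        unfold ndist. replace ((k - J) + (J - k))%nat with (J - k)%nat by lia.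
        pose proof (s2_pow_pos k). pose proof (s2_pow_pos (J - k)).
        assert (Ek : s2 ^ k * s2 ^ (J - k) = s2 ^ J) by (rewrite <- pow_add; f_equal; lia).
        pose proof (s2_pow_sq k) as Ek2.
        pose proof (pow_lt 2 k ltac:(lra)).
        apply Rmult_le_reg_l with (s2 ^ k); auto.
        assert (L : s2 ^ k * (s2 ^ k * ck k u v) <= s2 ^ k * s2 ^ k * 2 ^ k * c).
        { rewrite <- Rmult_assoc. rewrite (Rmult_assoc (s2^k * s2^k)). apply Rmult_le_compat_l; nra. }
        rewrite Ek2, Rmult_1_l in L.
        assert (R1 : s2 ^ k * (2 * s2 ^ J * s2 ^ (J - k)) = 2 * s2 ^ J * s2 ^ J) by (rewrite <- Ek; ring).
        rewrite R1. nra.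
      * unfold ndist. replace ((k - J) + (J - k))%nat with (k - J)%nat by lia.
        assert (Ek : s2 ^ J * s2 ^ (k - J) = s2 ^ k) by (rewrite <- pow_add; f_equal; lia).
        pose proof (ck_le2 k u v Hu Hv). pose proof (s2_pow_pos k). nra.
  - apply Rnot_le_lt in Hb. exists 0%nat. unfold good_J; fold c. simpl.
    split; [|split; [|split]].
    + fold c; lra.
    + assert (sqrt c <= 2); [|lra]. rewrite <- (sqrt_square 2) by lra. apply sqrt_le_1_alt. lra.
    + assert (/2 <= sqrt c); [|lra]. rewrite <- (sqrt_square (/2)) by lra. apply sqrt_le_1_alt. lra.
    + intro k. unfold ndist. replace ((k - 0) + (0 - k))%nat with k by lia.
      pose proof (ck_le2 k u v Hu Hv). pose proof (s2_pow_pos k). nra.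
Qed.

Definition N2 (x y : R) : R := sqrt (x * x + y * y).

Lemma N2_pos x y : 0 <= N2 x y.
Proof. apply sqrt_pos. Qed.

Lemma abs_le_N2 x y : Rabs x <= N2 x y.
Proof.
  unfold N2. rewrite <- sqrt_Rsqr_abs. apply sqrt_le_1_alt. unfold Rsqr.
  pose proof (Rle_0_sqr y). unfold Rsqr in *. lra.
Qed.

Lemma N2_sym x y : N2 x y = N2 y x.
Proof. unfold N2. f_equal. ring. Qed.

Lemma N2_le_abs x y : N2 x y <= Rabs x + Rabs y.
Proof.
  unfold N2. rewrite <- (sqrt_square (Rabs x + Rabs y)) by (pose proof (Rabs_pos x); pose proof (Rabs_pos y); lra).
  apply sqrt_le_1_alt.
  pose proof (Rabs_pos x); pose proof (Rabs_pos y).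
  assert (x * x = Rabs x * Rabs x) by (rewrite <- Rabs_mult; rewrite Rabs_pos_eq; nra).
  assert (y * y = Rabs y * Rabs y) by (rewrite <- Rabs_mult; rewrite Rabs_pos_eq; nra).
  nra.
Qed.

Lemma N2_sq x y : N2 x y * N2 x y = x * x + y * y.
Proof. unfold N2. apply sqrt_sqrt. nra. Qed.

Lemma N2_triang a b c d : N2 (a + c) (b + d) <= N2 a b + N2 c d.
Proof.
  pose proof (N2_pos a b). pose proof (N2_pos c d). pose proof (N2_pos (a+c) (b+d)).
  apply Rsqr_incr_0_var; [|lra]. unfold Rsqr.
  rewrite N2_sq.
  assert (a * c + b * d <= N2 a b * N2 c d).
  { unfold N2. rewrite <- sqrt_mult by nra.
    destruct (Rle_dec (a * c + b * d) 0); [pose proof (sqrt_pos ((a * a + b * b) * (c * c + d * d))); lra|].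
    rewrite <- (sqrt_square (a * c + b * d)) by lra. apply sqrt_le_1_alt.
    pose proof (Rle_0_sqr (a * d - b * c)). unfold Rsqr in *. nra. }
  pose proof (N2_sq a b). pose proof (N2_sq c d). nra.
Qed.

Lemma N2_scal k x y : 0 <= k -> N2 (k * x) (k * y) = k * N2 x y.
Proof.
  intro Hk. unfold N2. replace (k * x * (k * x) + k * y * (k * y)) with ((k * k) * (x * x + y * y)) by ring.
  rewrite sqrt_mult_alt by nra. rewrite sqrt_square by lra. reflexivity.
Qed.

Lemma fst_le_dist a b : Rabs (fst a - fst b) <= sqrt (dist2 a b).
Proof. apply abs_le_N2. Qed.
Lemma snd_le_dist a b : Rabs (snd a - snd b) <= sqrt (dist2 a b).
Proof. unfold dist2. rewrite Rplus_comm. apply abs_le_N2. Qed.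

Lemma unit_fst u : nrm2 u = 1 -> Rabs (fst u) <= 1.
Proof. intro H. unfold nrm2 in H. apply Rabs_le. pose proof (Rle_0_sqr (snd u)). unfold Rsqr in *. nra. Qed.
Lemma unit_snd u : nrm2 u = 1 -> Rabs (snd u) <= 1.
Proof. intro H. unfold nrm2 in H. apply Rabs_le. pose proof (Rle_0_sqr (fst u)). unfold Rsqr in *. nra. Qed.

Definition termP (b : nat) u i := s2 ^ (b + 16 * i) * fst (zk (b + 16 * i) u).
Definition termQ (b : nat) u i := s2 ^ (b + 16 * i) * snd (zk (b + 16 * i) u).
Definition Pb b u := Series (termP b u).
Definition Qb b u := Series (termQ b u).

Lemma qq_range : 0 <= qq < 1.
Proof. rewrite qq_val. lra. Qed.

Lemma s2_pow_le_qq b i : s2 ^ (b + 16 * i) <= qq ^ i.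
Proof.
  unfold qq. rewrite <- pow_mult. apply pow_decr; [pose proof s2_pos; pose proof s2_lt1; lra| lia].
Qed.

Lemma termP_bound b u : nrm2 u = 1 -> ex_series (termP b u) /\ Rabs (Pb b u) <= 3.
Proof.
  intro Hu. destruct (full_bound (termP b u) 0 1 qq qq_range ltac:(lra)) as [H1 H2].
  - intro i. unfold termP, ndist. replace ((i - 0) + (0 - i))%nat with i by lia.
    rewrite Rabs_mult, Rabs_pos_eq by (apply pow_le; pose proof s2_pos; lra).
    pose proof (unit_fst _ (nrm2_zk (b + 16 * i) u Hu)). pose proof (s2_pow_le_qq b i).
    pose proof (s2_pow_pos (b + 16 * i)). rewrite Rmult_1_l. 
    pose proof (Rabs_pos (fst (zk (b + 16 * i) u))). nra.
  - split; auto. unfold Pb. eapply Rle_trans; [exact H2|]. rewrite qq_val. lra.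
Qed.

Lemma termQ_bound b u : nrm2 u = 1 -> ex_series (termQ b u) /\ Rabs (Qb b u) <= 3.
Proof.
  intro Hu. destruct (full_bound (termQ b u) 0 1 qq qq_range ltac:(lra)) as [H1 H2].
  - intro i. unfold termQ, ndist. replace ((i - 0) + (0 - i))%nat with i by lia.
    rewrite Rabs_mult, Rabs_pos_eq by (apply pow_le; pose proof s2_pos; lra).
    pose proof (unit_snd _ (nrm2_zk (b + 16 * i) u Hu)). pose proof (s2_pow_le_qq b i).
    pose proof (s2_pow_pos (b + 16 * i)). rewrite Rmult_1_l. 
    pose proof (Rabs_pos (snd (zk (b + 16 * i) u))). nra.
  - split; auto. unfold Qb. eapply Rle_trans; [exact H2|]. rewrite qq_val. lra.
Qed.

Lemma diff_term_bound (k : nat) u v :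
  Rabs (s2 ^ k * fst (zk k u) - s2 ^ k * fst (zk k v)) <= s2 ^ k * ck k u v /\
  Rabs (s2 ^ k * snd (zk k u) - s2 ^ k * snd (zk k v)) <= s2 ^ k * ck k u v.
Proof.
  pose proof (s2_pow_pos k).
  rewrite <- !Rmult_minus_distr_l, !Rabs_mult, !(Rabs_pos_eq (s2 ^ k)) by lra.
  split; apply Rmult_le_compat_l; try lra; [apply fst_le_dist| apply snd_le_dist].
Qed.

Lemma P_diff_upper_gen (sel : R * R -> R) b u v :
  (forall k, Rabs (s2 ^ k * sel (zk k u) - s2 ^ k * sel (zk k v)) <= s2 ^ k * ck k u v) ->
  nrm2 u = 1 -> nrm2 v = 1 -> (b < 16)%nat ->
  ex_series (fun i => s2 ^ (b + 16 * i) * sel (zk (b + 16 * i) u) - s2 ^ (b + 16 * i) * sel (zk (b + 16 * i) v)) /\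
  Rabs (Series (fun i => s2 ^ (b + 16 * i) * sel (zk (b + 16 * i) u) - s2 ^ (b + 16 * i) * sel (zk (b + 16 * i) v)))
    <= 2100 * sqrt (ck 0 u v).
Proof.
  intros Hsel Hu Hv Hb.
  pose proof (ck_nonneg 0 u v) as Hc0.
  destruct (Req_dec (ck 0 u v) 0) as [Hz|Hnz].
  - destruct (full_bound (fun i => s2 ^ (b + 16 * i) * sel (zk (b + 16 * i) u) - s2 ^ (b + 16 * i) * sel (zk (b + 16 * i) v)) 0 0 qq qq_range ltac:(lra)) as [H1 H2].
    + intro i. eapply Rle_trans; [apply Hsel|]. pose proof (ck_upper (b + 16 * i) u v Hu Hv).
      rewrite Hz in H. pose proof (ck_nonneg (b + 16 * i) u v). 
      rewrite Rmult_0_r in H. assert (ck (b + 16 * i) u v = 0) by lra. rewrite H1. lra.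
    + split; auto. eapply Rle_trans; [exact H2|]. rewrite Hz, sqrt_0. lra.
  - destruct (good_J_exists u v Hu Hv ltac:(lra)) as [J [HJ1 [HJ2 [HJ3 HJ4]]]].
    set (i0 := ((J - b) / 16)%nat).
    pose proof (s2_pow_pos J). pose proof qq_range.
    assert (Hqp : 0 < qq) by (rewrite qq_val; lra).
    destruct (full_bound (fun i => s2 ^ (b + 16 * i) * sel (zk (b + 16 * i) u) - s2 ^ (b + 16 * i) * sel (zk (b + 16 * i) v)) i0 (2 * s2 ^ J / qq) qq qq_range) as [H1 H2].
    + apply Rlt_le. apply Rdiv_lt_0_compat; lra.
    + intro i. eapply Rle_trans; [apply Hsel|]. eapply Rle_trans; [apply HJ4|].
      set (k := (b + 16 * i)%nat).
      assert (Hn : (16 * ndist i i0 <= ndist k J + 16)%nat) by (unfold ndist, k, i0; clear -Hb; pose proof (Nat.div_mod (J-b) 16 ltac:(lia)); pose proof (Nat.mod_upper_bound (J-b) 16 ltac:(lia)); lia).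
      assert (Hp : s2 ^ (ndist k J + 16) <= s2 ^ (16 * ndist i i0)).
      { apply pow_decr; [pose proof s2_pos; pose proof s2_lt1; lra| exact Hn]. }
      rewrite pow_add, pow_mult in Hp. fold qq in Hp.
      pose proof (s2_pow_pos (ndist k J)).
      assert (s2 ^ ndist k J <= qq ^ ndist i i0 / qq).
      { apply Rmult_le_reg_r with qq; auto. unfold Rdiv. rewrite Rmult_assoc, Rinv_l by lra. lra. }
      replace (2 * s2 ^ J / qq * qq ^ ndist i i0) with (2 * s2 ^ J * (qq ^ ndist i i0 / qq)) by (field; lra).
      apply Rmult_le_compat_l; lra.
    + split; auto. eapply Rle_trans; [exact H2|].
      rewrite qq_val. rewrite qq_val in Hqp.
      assert (E : 2 * (2 * s2 ^ J / / 256) / (1 - / 256) = s2 ^ J * (4 * 256 * 256 / 255)) by (field; lra).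
      rewrite E. lra.
Qed.

Lemma P_diff_upper b u v : nrm2 u = 1 -> nrm2 v = 1 -> (b < 16)%nat ->
  Rabs (Pb b u - Pb b v) <= 2100 * sqrt (ck 0 u v).
Proof.
  intros Hu Hv Hb.
  destruct (P_diff_upper_gen fst b u v (fun k => proj1 (diff_term_bound k u v)) Hu Hv Hb) as [_ H].
  unfold Pb. rewrite <- Series_minus by (apply termP_bound; auto). exact H.
Qed.

Lemma Q_diff_upper b u v : nrm2 u = 1 -> nrm2 v = 1 -> (b < 16)%nat ->
  Rabs (Qb b u - Qb b v) <= 2100 * sqrt (ck 0 u v).
Proof.
  intros Hu Hv Hb.
  destruct (P_diff_upper_gen snd b u v (fun k => proj2 (diff_term_bound k u v)) Hu Hv Hb) as [_ H].
  unfold Qb. rewrite <- Series_minus by (apply termQ_bound; auto). exact H.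
Qed.

Lemma split_diff (sel : R * R -> R) b u v J :
  (forall k, Rabs (s2 ^ k * sel (zk k u) - s2 ^ k * sel (zk k v)) <= s2 ^ k * ck k u v) ->
  good_J u v J -> (b + 16 * (J / 16) = J)%nat ->
  Rabs (Series (fun i => s2 ^ (b + 16 * i) * sel (zk (b + 16 * i) u) - s2 ^ (b + 16 * i) * sel (zk (b + 16 * i) v))
        - (s2 ^ J * sel (zk J u) - s2 ^ J * sel (zk J v))) <= 2 * (2 * s2 ^ J) * qq / (1 - qq).
Proof.
  intros Hsel [HJ1 [HJ2 [HJ3 HJ4]]] HbJ.
  set (i0 := (J / 16)%nat) in *.
  pose proof (s2_pow_pos J) as HsJ.
  destruct (split_bound (fun i => s2 ^ (b + 16 * i) * sel (zk (b + 16 * i) u) - s2 ^ (b + 16 * i) * sel (zk (b + 16 * i) v)) i0 (2 * s2 ^ J) qq qq_range ltac:(lra)) as [_ Hs].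
  - intros i Hi. eapply Rle_trans; [apply Hsel|]. eapply Rle_trans; [apply HJ4|].
    assert (E : ndist (b + 16 * i) J = (16 * ndist i i0)%nat) by (unfold ndist; clear -HbJ; lia).
    rewrite E, pow_mult. fold qq. lra.
  - cbv beta in Hs. rewrite HbJ in Hs. exact Hs.
Qed.

Lemma PQ_lower u v : nrm2 u = 1 -> nrm2 v = 1 -> 0 < ck 0 u v ->
  exists b, (b < 16)%nat /\ sqrt (ck 0 u v) / 10 <= N2 (Pb b u - Pb b v) (Qb b u - Qb b v).
Proof.
  intros Hu Hv Hc.
  destruct (good_J_exists u v Hu Hv Hc) as [J HJ].
  set (b := (J mod 16)%nat).
  assert (HbJ : (b + 16 * (J / 16) = J)%nat).
  { unfold b. pose proof (Nat.div_mod J 16 ltac:(lia)). lia. }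
  exists b. split; [unfold b; apply Nat.mod_upper_bound; lia|].
  pose proof (split_diff fst b u v J (fun k => proj1 (diff_term_bound k u v)) HJ HbJ) as H1.
  pose proof (split_diff snd b u v J (fun k => proj2 (diff_term_bound k u v)) HJ HbJ) as H2.
  unfold Pb, Qb.
  rewrite <- !Series_minus by (first [apply termP_bound | apply termQ_bound]; auto).
  unfold termP, termQ.
  set (SP := Series _) in H1 |- *. set (SQ := Series _) in H2 |- *.
  destruct HJ as [HJ1 [HJ2 [HJ3 HJ4]]].
  pose proof (s2_pow_pos J).
  set (dP := s2 ^ J * fst (zk J u) - s2 ^ J * fst (zk J v)) in *.
  set (dQ := s2 ^ J * snd (zk J u) - s2 ^ J * snd (zk J v)) in *.
  assert (Hd : N2 dP dQ = s2 ^ J * ck J u v).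
  { unfold dP, dQ. rewrite <- !Rmult_minus_distr_l, N2_scal by lra. reflexivity. }
  pose proof (N2_triang SP SQ (dP - SP) (dQ - SQ)) as T.
  replace (SP + (dP - SP)) with dP in T by ring. replace (SQ + (dQ - SQ)) with dQ in T by ring.
  pose proof (N2_le_abs (dP - SP) (dQ - SQ)).
  rewrite Rabs_minus_sym in H1, H2.
  rewrite qq_val in H1, H2.
  assert (E : 2 * (2 * s2 ^ J) * / 256 / (1 - / 256) = s2 ^ J * (4 / 255)) by (field; lra).
  rewrite E in H1, H2.
  assert (s2 ^ J * (47 / 192) <= s2 ^ J * ck J u v) by (apply Rmult_le_compat_l; lra).
  pose proof (sqrt_pos (ck 0 u v)). lra.
Qed.

Section FG.
Variables (F F' : R -> R) (K : R).
Hypothesis Hd : forall t, 0 <= t -> has_deriv_nonneg F t (F' t).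
Hypothesis HK : 0 <= K.
Hypothesis HL : forall s t, 0 <= s -> 0 <= t -> Rabs (F' s - F' t) <= K * Rabs (s - t).
Hypothesis HF0 : F' 0 = 0.

Lemma F'_bound s : 0 <= s -> Rabs (F' s) <= K * s.
Proof.
  intro Hs. pose proof (HL s 0 Hs (Rle_refl 0)). rewrite HF0, Rminus_0_r, Rminus_0_r in H.
  rewrite (Rabs_pos_eq s) in H by lra. exact H.
Qed.

Lemma F_derivable t : 0 < t -> derivable_pt_lim F t (F' t).
Proof.
  intros Ht eps Heps.
  destruct (Hd t (Rlt_le _ _ Ht) (eps / 2) ltac:(lra)) as [del [Hdel H]].
  assert (Hm : 0 < Rmin del t) by (apply Rmin_pos; lra).
  exists (mkposreal _ Hm). intros h Hh Hhd. simpl in Hhd.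
  assert (Hh1 : Rabs h < del) by (pose proof (Rmin_l del t); lra).
  assert (Hh2 : Rabs h < t) by (pose proof (Rmin_r del t); lra).
  assert (Hs : 0 <= t + h) by (pose proof (Rabs_le_between h); apply Rabs_def2 in Hh2; lra).
  specialize (H (t + h) Hs). replace (t + h - t) with h in H by ring.
  specialize (H Hh1).
  assert (Hp : 0 < Rabs h) by (apply Rabs_pos_lt; auto).
  replace ((F (t + h) - F t) / h - F' t) with ((F (t + h) - F t - F' t * h) / h) by (field; auto).
  unfold Rdiv. rewrite Rabs_mult, Rabs_inv.
  apply Rmult_le_compat_r with (r := / Rabs h) in H; [|apply Rlt_le, Rinv_0_lt_compat; auto].
  replace (eps / 2 * Rabs h * / Rabs h) with (eps / 2) in H by (field; lra). lra.
Qed.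

Lemma F_taylor a b : 0 < a -> a <= b -> Rabs (F b - F a - F' b * (b - a)) <= K * (b - a) * (b - a).
Proof.
  intros Ha Hab. destruct (Req_dec a b) as [E|E].
  - subst. replace (F b - F b - F' b * (b - b)) with 0 by ring. rewrite Rabs_R0. nra.
  - assert (Hlt : a < b) by lra.
    destruct (MVT_cor2 (fun t => F t - F' b * t) (fun t => F' t - F' b * 1) a b Hlt) as [c [Hc1 Hc2]].
    + intros c Hc. apply (derivable_pt_lim_minus F (mult_real_fct (F' b) id)).
      * apply F_derivable; lra.
      * apply derivable_pt_lim_scal, derivable_pt_lim_id.
    + replace (F b - F a - F' b * (b - a)) with (F b - F' b * b - (F a - F' b * a)) by ring.
      rewrite Hc1. rewrite Rmult_1_r, Rabs_mult, (Rabs_pos_eq (b - a)) by lra.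
      pose proof (HL c b ltac:(lra) ltac:(lra)). rewrite (Rabs_left1 (c - b)) in H by lra.
      apply Rmult_le_compat_r; nra.
Qed.

Lemma F_diff_pos a b : 0 < a -> a <= b -> Rabs (F b - F a) <= K * b * (b - a).
Proof.
  intros Ha Hab. destruct (Req_dec a b) as [E|E].
  - subst. replace (F b - F b) with 0 by ring. rewrite Rabs_R0. nra.
  - destruct (MVT_cor2 F F' a b ltac:(lra)) as [c [Hc1 Hc2]].
    + intros c Hc. apply F_derivable; lra.
    + rewrite Hc1, Rabs_mult, (Rabs_pos_eq (b - a)) by lra.
      pose proof (F'_bound c ltac:(lra)). apply Rmult_le_compat_r; nra.
Qed.

Lemma F_diff a b : 0 <= a -> a <= b -> Rabs (F b - F a) <= K * b * (b - a).
Proof.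
  intros Ha Hab. destruct (Req_dec a 0) as [Z|NZ]; [|apply F_diff_pos; lra].
  subst a. destruct (Req_dec b 0) as [Zb|NZb].
  - subst. replace (F 0 - F 0) with 0 by ring. rewrite Rabs_R0. lra.
  - destruct (Rle_dec (Rabs (F b - F 0)) (K * b * (b - 0))) as [ok|bad]; auto.
    exfalso. apply Rnot_le_lt in bad.
    set (e := Rabs (F b - F 0) - K * b * (b - 0)).
    destruct (Hd 0 (Rle_refl 0) 1 ltac:(lra)) as [del [Hdel H]].
    set (s := Rmin (del / 2) (Rmin (b / 2) (e / 2))).
    assert (Hs1 : 0 < s) by (unfold s; repeat apply Rmin_pos; unfold e; lra).
    assert (Hs2 : s <= del / 2) by apply Rmin_l.
    assert (Hs3 : s <= b / 2) by (unfold s; eapply Rle_trans; [apply Rmin_r| apply Rmin_l]).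
    assert (Hs4 : s <= e / 2) by (unfold s; eapply Rle_trans; [apply Rmin_r| apply Rmin_r]).
    specialize (H s ltac:(lra)). rewrite HF0, !Rminus_0_r, Rmult_0_l, Rminus_0_r in H. rewrite (Rabs_pos_eq s) in H by lra.
    specialize (H ltac:(lra)).
    pose proof (F_diff_pos s b Hs1 ltac:(lra)).
    assert (Rabs (F b - F 0) <= Rabs (F b - F s) + Rabs (F s - F 0)).
    { replace (F b - F 0) with ((F b - F s) + (F s - F 0)) by ring. apply Rabs_triang. }
    assert (K * b * (b - s) <= K * b * (b - 0)) by (apply Rmult_le_compat_l; nra).
    unfold e in *. lra.
Qed.

Lemma F'_cont t : 0 < t -> continuity_pt F' t.
Proof.
  intros Ht eps Heps. exists (Rmin t (eps / (K + 1))). split.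
  - apply Rmin_pos; [lra| apply Rdiv_lt_0_compat; lra].
  - intros x [_ Hx]. simpl in *. unfold R_dist in *.
    assert (Hx1 : Rabs (x - t) < t) by (pose proof (Rmin_l t (eps / (K + 1))); lra).
    assert (Hx2 : Rabs (x - t) < eps / (K + 1)) by (pose proof (Rmin_r t (eps / (K + 1))); lra).
    apply Rabs_def2 in Hx1.
    pose proof (HL x t ltac:(lra) ltac:(lra)).
    assert (K * Rabs (x - t) <= (K + 1) * Rabs (x - t)) by (pose proof (Rabs_pos (x - t)); nra).
    assert ((K + 1) * Rabs (x - t) < (K + 1) * (eps / (K + 1))) by (apply Rmult_lt_compat_l; lra).
    replace ((K + 1) * (eps / (K + 1))) with eps in H1 by (field; lra). lra.
Qed.

Definition gfun (s : R) : R := 2 * F' s / (s * s).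
Definition Gfun (r : R) : R := RInt gfun 1 r.

Lemma g_cont t : 0 < t -> continuous gfun t.
Proof.
  intro Ht. apply continuity_pt_filterlim.
  unfold gfun. 
  apply (continuity_pt_div (fun s => 2 * F' s) (fun s => s * s)).
  - apply (continuity_pt_mult (fun _ => 2) F'). apply continuity_pt_const; intros ? ?; auto. apply F'_cont; auto.
  - apply (continuity_pt_mult (fun s => s) (fun s => s)); apply continuity_pt_id.
  - nra.
Qed.

Lemma g_exRInt a b : 0 < a -> 0 < b -> ex_RInt gfun a b.
Proof.
  intros Ha Hb. apply (ex_RInt_continuous (V := R_CompleteNormedModule)). intros z [Hz1 Hz2]. apply g_cont.
  pose proof (Rmin_glb_lt a b 0). unfold Rmin in *. destruct (Rle_dec a b); lra.
Qed.

Lemma g_bound r : 0 < r -> Rabs (gfun r) <= 2 * K / r.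
Proof.
  intro Hr. unfold gfun. pose proof (F'_bound r ltac:(lra)).
  unfold Rdiv. rewrite Rabs_mult, Rabs_mult, Rabs_inv, (Rabs_pos_eq 2) by lra.
  rewrite (Rabs_pos_eq (r * r)) by nra.
  replace (2 * K * / r) with (2 * (K * r) * / (r * r)) by (field; lra).
  apply Rmult_le_compat_r; [apply Rlt_le, Rinv_0_lt_compat; nra| lra].
Qed.

Lemma g_lip t r : 0 < t -> t <= r -> r <= 2 * t -> Rabs (gfun t - gfun r) <= 24 * K * (r - t) / (r * r).
Proof.
  intros Ht Htr Hr2. unfold gfun.
  assert (Htt : 0 < t * t) by nra. assert (Hrr : 0 < r * r) by nra.
  assert (Htr4 : 0 < t * t * (r * r)) by (apply Rmult_lt_0_compat; lra).
  pose proof (HL t r ltac:(lra) ltac:(lra)) as H1. rewrite (Rabs_minus_sym t r), (Rabs_pos_eq (r - t)) in H1 by lra.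
  pose proof (F'_bound r ltac:(lra)) as H2.
  replace (2 * F' t / (t * t) - 2 * F' r / (r * r))
    with (2 * ((F' t - F' r) / (t * t) + F' r * ((r - t) * (r + t)) / (t * t * (r * r)))) by (field; lra).
  rewrite Rabs_mult, (Rabs_pos_eq 2) by lra.
  assert (A1 : Rabs ((F' t - F' r) / (t * t)) <= K * (r - t) / (t * t)).
  { unfold Rdiv. rewrite Rabs_mult, Rabs_inv, (Rabs_pos_eq (t * t)) by nra.
    apply Rmult_le_compat_r; [apply Rlt_le, Rinv_0_lt_compat; nra| lra]. }
  assert (A2 : Rabs (F' r * ((r - t) * (r + t)) / (t * t * (r * r))) <= K * r * ((r - t) * (r + t)) / (t * t * (r * r))).
  { assert (HM : 0 <= (r - t) * (r + t) / (t * t * (r * r))).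
    { apply Rmult_le_pos; [nra| apply Rlt_le, Rinv_0_lt_compat; nra]. }
    replace (F' r * ((r - t) * (r + t)) / (t * t * (r * r))) with (F' r * ((r - t) * (r + t) / (t * t * (r * r)))) by (field; lra).
    replace (K * r * ((r - t) * (r + t)) / (t * t * (r * r))) with (K * r * ((r - t) * (r + t) / (t * t * (r * r)))) by (field; lra).
    rewrite Rabs_mult, (Rabs_pos_eq (_ / _)) by exact HM.
    apply Rmult_le_compat_r; lra. }
  assert (B1 : K * (r - t) / (t * t) <= 4 * K * (r - t) / (r * r)).
  { unfold Rdiv. apply Rmult_le_reg_r with (t * t * (r * r)); [nra|].
    replace (K * (r - t) * / (t * t) * (t * t * (r * r))) with (K * (r - t) * (r * r)) by (field; lra).
    replace (4 * K * (r - t) * / (r * r) * (t * t * (r * r))) with (K * (r - t) * (4 * (t * t))) by (field; lra).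
    assert (0 <= K * (r - t)) by nra. apply Rmult_le_compat_l; nra. }
  assert (B2 : K * r * ((r - t) * (r + t)) / (t * t * (r * r)) <= 8 * K * (r - t) / (r * r)).
  { unfold Rdiv. apply Rmult_le_reg_r with (t * t * (r * r)); [nra|].
    replace (K * r * ((r - t) * (r + t)) * / (t * t * (r * r)) * (t * t * (r * r))) with (K * (r - t) * (r * (r + t))) by (field; lra).
    replace (8 * K * (r - t) * / (r * r) * (t * t * (r * r))) with (K * (r - t) * (8 * t * t)) by (field; lra).
    assert (0 <= K * (r - t)) by nra. apply Rmult_le_compat_l; nra. }
  pose proof (Rabs_triang ((F' t - F' r) / (t * t)) (F' r * ((r - t) * (r + t)) / (t * t * (r * r)))).
  assert (E : 24 * K * (r - t) / (r * r) = 2 * (4 * K * (r - t) / (r * r) + 8 * K * (r - t) / (r * r))) by (field; lra).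
  rewrite E. lra.
Qed.

Lemma G_taylor r' r : 0 < r' -> r' <= r -> r <= 2 * r' ->
  Rabs (Gfun r - Gfun r' - gfun r * (r - r')) <= 24 * K * (r - r') * (r - r') / (r * r).
Proof.
  intros H1 H2 H3. unfold Gfun.
  assert (Ech : RInt gfun 1 r = RInt gfun 1 r' + RInt gfun r' r).
  { symmetry. apply (RInt_Chasles gfun 1 r' r); apply g_exRInt; lra. }
  rewrite Ech.
  replace (RInt gfun 1 r' + RInt gfun r' r - RInt gfun 1 r' - gfun r * (r - r'))
    with (RInt gfun r' r - RInt (fun _ => gfun r) r' r).
  2:{ rewrite RInt_const. unfold scal; simpl; unfold mult; simpl. ring. }
  assert (Em : RInt gfun r' r - RInt (fun _ => gfun r) r' r = RInt (fun t => gfun t - gfun r) r' r).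
  { symmetry. apply (RInt_minus gfun (fun _ => gfun r) r' r); [apply g_exRInt; lra| apply ex_RInt_const]. }
  rewrite Em.
  replace (24 * K * (r - r') * (r - r') / (r * r)) with ((r - r') * (24 * K * (r - r') / (r * r))) by (field; lra).
  apply abs_RInt_le_const; auto.
  - apply (ex_RInt_minus (V := R_CompleteNormedModule) gfun (fun _ => gfun r)); [apply g_exRInt; lra| apply ex_RInt_const].
  - intros t [Ht1 Ht2]. eapply Rle_trans; [apply g_lip; lra|].
    unfold Rdiv. apply Rmult_le_compat_r; [apply Rlt_le, Rinv_0_lt_compat; nra|]. nra.
Qed.

End FG.

Lemma sin_pos_bound y : 0 <= y -> - y <= sin y <= y.
Proof.
  intro Hy. destruct (Req_dec y 0) as [E|E]; [subst; rewrite sin_0; lra|].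
  pose proof (sin_lt_x y ltac:(lra)). pose proof (SIN_bound y).
  destruct (Rle_dec 1 y); [lra|].
  pose proof PI2_3_2. pose proof (sin_ge_0 y Hy ltac:(lra)). lra.
Qed.

Lemma sin_abs_le x : Rabs (sin x) <= Rabs x.
Proof.
  apply Rabs_le. destruct (Rle_dec 0 x).
  - rewrite Rabs_pos_eq by lra. apply sin_pos_bound; lra.
  - rewrite Rabs_left by lra. pose proof (sin_pos_bound (-x) ltac:(lra)). rewrite sin_neg in H. lra.
Qed.

Lemma one_minus_cos x : 0 <= 1 - cos x <= x * x / 2.
Proof.
  assert (Hc : cos x = 1 - 2 * sin (x/2) * sin (x/2)) by (rewrite <- cos_2a_sin; f_equal; field).
  pose proof (Rsqr_le_abs_1 _ _ (sin_abs_le (x / 2))). unfold Rsqr in H.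
  pose proof (Rle_0_sqr (sin (x/2))). unfold Rsqr in H0.
  rewrite Hc. set (t := sin (x / 2)) in *. 
  assert (E : x / 2 * (x / 2) = x * x / 4) by field. rewrite E in H.
  replace (1 - (1 - 2 * t * t)) with (2 * (t * t)) by ring. lra.
Qed.

Lemma sin_minus_x x : Rabs (sin x - x) <= x * x.
Proof.
  destruct (Rle_dec 2 (Rabs x)) as [Hb|Hs].
  - pose proof (SIN_bound x). eapply Rle_trans; [apply Rabs_triang|].
    rewrite Rabs_Ropp. assert (Rabs (sin x) <= 1) by (apply Rabs_le; lra).
    assert (Rabs x * Rabs x = x * x) by (rewrite <- Rabs_mult; apply Rabs_pos_eq; nra).
    nra.
  - apply Rnot_le_lt in Hs.
    destruct (Rtotal_order x 0) as [H|[H|H]].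
    + destruct (MVT_cor2 sin cos x 0 H) as [c [Hc1 Hc2]]. { intros; apply derivable_pt_lim_sin. }
      rewrite sin_0 in Hc1.
      replace (sin x - x) with (- ((cos c - 1) * (0 - x))) by lra.
      rewrite Rabs_Ropp, Rabs_mult, (Rabs_pos_eq (0 - x)) by lra.
      pose proof (one_minus_cos c). rewrite Rabs_left1 by lra.
      rewrite Rabs_left in Hs by lra.
      assert ((1 - cos c) <= - x) by nra. nra.
    + subst. rewrite sin_0. replace (0 - 0) with 0 by ring. rewrite Rabs_R0. lra.
    + destruct (MVT_cor2 sin cos 0 x H) as [c [Hc1 Hc2]]. { intros; apply derivable_pt_lim_sin. }
      rewrite sin_0 in Hc1.
      replace (sin x - x) with ((cos c - 1) * (x - 0)) by lra.
      rewrite Rabs_mult, (Rabs_pos_eq (x - 0)) by lra.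
      pose proof (one_minus_cos c). rewrite Rabs_left1 by lra.
      rewrite Rabs_pos_eq in Hs by lra.
      assert ((1 - cos c) <= x) by nra. nra.
Qed.

Definition om (a b g : R) : R * R := (a * cos g + b * sin g, - a * sin g + b * cos g).

(* purely algebraic core, trig abstracted *)
Lemma core_alg (K r r' s d cb sb be c X F0 F1 Fp W2 : R) :
  0 <= K -> 0 < r' -> r' <= r -> r <= 2 * r' ->
  s * s + d * d = 1 -> cb * cb + sb * sb = 1 ->
  W2 = (r - r') * (r - r') + 2 * r * r' * (1 - d) ->
  X = cb * s + sb * d ->
  0 <= c -> c * c = 2 - 2 * (cb * d - sb * s) ->
  Rabs (F0 - F1 - Fp * (r - r')) <= K * (r - r') * (r - r') ->
  Rabs Fp <= K * r ->
  Rabs (r * r * be - 2 * Fp * (r - r')) <= 24 * K * (r - r') * (r - r') ->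
  0 <= 1 - cb <= be * be / 2 -> Rabs (sb - be) <= be * be -> Rabs sb <= Rabs be ->
  Rabs (F0 - F1 + / 2 * r * r' * s) <= r' * r' * c + 500 * (1 + K) ^ 2 * W2 /\
  r' * r' * c <= 2 * Rabs (F0 - F1 + / 2 * r * r' * s) + 500 * (1 + K) ^ 2 * W2.
Proof.
  intros HK Hr' Hrr Hr2 Hsd Hcs HW HX Hc0 Hc2 HF HFp Hg Hcb Hsb Hsbb.
  set (D := r - r') in *.
  assert (HD : 0 <= D) by (unfold D; lra). assert (HD2 : 2 * D <= r) by (unfold D; lra).
  assert (Hr : 0 < r) by lra.
  assert (Hrb : Rabs (r * be) <= 14 * K * D).
  { assert (H1 : Rabs (r * r * be) <= 14 * K * r * D).
    { replace (r * r * be) with ((r * r * be - 2 * Fp * D) + 2 * Fp * D) by ring.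
      eapply Rle_trans; [apply Rabs_triang|].
      rewrite !Rabs_mult, (Rabs_pos_eq 2), (Rabs_pos_eq D) by lra.
      assert (Rabs Fp * D <= K * r * D) by (apply Rmult_le_compat_r; lra).
      assert (24 * K * D * D <= 12 * K * r * D) by (assert (0 <= K * D) by nra; nra).
      nra. }
    rewrite Rmult_assoc, Rabs_mult, (Rabs_pos_eq r) in H1 by lra.
    apply Rmult_le_reg_l with r; [lra|]. nra. }
  assert (Hrb2 : r * r * (be * be) <= 196 * K * K * (D * D)).
  { pose proof (Rabs_pos (r * be)). 
    assert (Rabs (r * be) * Rabs (r * be) <= (14 * K * D) * (14 * K * D)) by (apply Rmult_le_compat; lra).
    rewrite <- Rabs_mult, Rabs_pos_eq in H0 by nra. nra. }
  assert (Hbe7 : Rabs be <= 7 * K).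
  { rewrite Rabs_mult, (Rabs_pos_eq r) in Hrb by lra.
    apply Rmult_le_reg_l with r; [lra|]. assert (0 <= K * D) by nra. nra. }
  assert (Hd1 : d <= 1) by nra.
  assert (Hs1 : s * s <= 1) by nra.
  assert (Habs_s : Rabs s <= 1) by (apply Rabs_le; nra).
  assert (HW1 : D * D <= W2) by (rewrite HW; assert (0 <= r * r' * (1 - d)) by (apply Rmult_le_pos; nra); nra).
  assert (HW2 : r * r * (1 - d) <= W2).
  { rewrite HW. assert (r * r * (1 - d) <= 2 * r * r' * (1 - d)).
    { replace (2 * r * r' * (1 - d)) with (r * (2 * r') * (1 - d)) by ring.
      apply Rmult_le_compat_r; [lra|]. apply Rmult_le_compat_l; lra. }
    nra. }
  set (dot := cb * d - sb * s) in *.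
  assert (Hdot : X * X + dot * dot = 1).
  { rewrite HX. unfold dot. replace ((cb * s + sb * d) * (cb * s + sb * d) + (cb * d - sb * s) * (cb * d - sb * s))
      with ((s * s + d * d) * (cb * cb + sb * sb)) by ring. rewrite Hsd, Hcs. ring. }
  assert (Hdotb : -1 <= dot <= 1) by nra.
  assert (Hc4 : c <= 2) by nra.
  assert (HXc : X * X = c * c - c * c * (c * c) / 4).
  { assert (dot = 1 - c * c / 2) by lra. rewrite H in Hdot. nra. }
  assert (HXle : Rabs X <= c).
  { apply Rabs_le. assert (X * X <= c * c) by nra. nra. }
  assert (Hcle : c <= Rabs X + c * c / 2).
  { pose proof (Rabs_pos X). 
    assert (HA : Rabs X * Rabs X = X * X) by (rewrite <- Rabs_mult; apply Rabs_pos_eq; nra).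
    destruct (Rle_dec c (Rabs X + c * c / 2)) as [ok|bad]; auto. exfalso.
    apply Rnot_le_lt in bad.
    assert (Rabs X * Rabs X < (c - c * c / 2) * (c - c * c / 2)) by (apply Rmult_le_0_lt_compat; nra).
    nra. }
  assert (Hcc : c * c <= 4 * (1 - d) + 2 * (be * be)).
  { rewrite Hc2. unfold dot.
    assert (H1 : 2 * Rabs (sb * s) <= 2 * (1 - cb) + 2 * (1 - d)).
    { assert (sb * sb <= 2 * (1 - cb)) by nra. assert (s * s <= 2 * (1 - d)) by nra.
      rewrite Rabs_mult. pose proof (Rabs_pos sb). pose proof (Rabs_pos s).
      assert (Rabs sb * Rabs sb = sb * sb) by (rewrite <- Rabs_mult; apply Rabs_pos_eq; nra).
      assert (Rabs s * Rabs s = s * s) by (rewrite <- Rabs_mult; apply Rabs_pos_eq; nra).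
      pose proof (Rle_0_sqr (Rabs sb - Rabs s)). unfold Rsqr in *. nra. }
    assert (0 <= (1 - d) * (1 - cb)) by (apply Rmult_le_pos; lra).
    pose proof (Rle_abs (sb * s)).
    assert (E : (1 - d) * (1 - cb) = 1 - d - cb + cb * d) by ring.
    lra. }
  assert (Hrc2 : r' * r' * (c * c) <= (4 + 392 * K * K) * W2).
  { assert (r' * r' * (c * c) <= r * r * (c * c)) by (apply Rmult_le_compat_r; nra).
    assert (r * r * (c * c) <= r * r * (4 * (1 - d) + 2 * (be * be))) by (apply Rmult_le_compat_l; nra).
    assert (392 * K * K * (D * D) <= 392 * K * K * W2) by (apply Rmult_le_compat_l; nra).
    nra. }
  set (T := F0 - F1 + / 2 * r * r' * s).
  set (e1 := F0 - F1 - Fp * D).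
  set (e2 := / 2 * r * r' * s * (1 - cb)).
  set (e3 := Fp * D * D / r).
  set (e4 := - / 2 * (r' / r) * (r * r * be - 2 * Fp * D)).
  set (e5 := - / 2 * r * r' * (sb - be)).
  set (e6 := / 2 * r * r' * sb * (1 - d)).
  assert (HE : T - / 2 * r * r' * X = e1 + e2 + e3 + e4 + e5 + e6).
  { unfold T, e1, e2, e3, e4, e5, e6. rewrite HX. unfold D. field. lra. }
  assert (Hrr' : 0 <= r * r') by nra.
  assert (B1 : Rabs e1 <= K * (D * D)) by (unfold e1; rewrite <- Rmult_assoc; exact HF).
  assert (B2 : Rabs e2 <= 49 * K * K * (D * D)).
  { unfold e2. rewrite Rabs_mult, Rabs_mult, (Rabs_pos_eq (1 - cb)) by lra.
    rewrite (Rabs_pos_eq (/ 2 * r * r')) by nra.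
    assert (Rabs s * (1 - cb) <= 1 * (be * be / 2)) by (apply Rmult_le_compat; try lra; apply Rabs_pos).
    assert (/ 2 * r * r' * (Rabs s * (1 - cb)) <= / 2 * r * r * (be * be / 2)).
    { apply Rmult_le_compat; try nra. apply Rmult_le_pos; [apply Rabs_pos| lra]. }
    nra. }
  assert (B3 : Rabs e3 <= K * (D * D)).
  { unfold e3. unfold Rdiv. rewrite !Rabs_mult, Rabs_inv, (Rabs_pos_eq D), (Rabs_pos_eq r) by lra.
    replace (Rabs Fp * D * D * / r) with (Rabs Fp * / r * (D * D)) by ring.
    apply Rmult_le_compat_r; [nra|]. 
    apply Rmult_le_reg_r with r; [lra|]. rewrite Rmult_assoc, Rinv_l, Rmult_1_r by lra. lra. }
  assert (B4 : Rabs e4 <= 12 * K * (D * D)).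
  { unfold e4. rewrite Rabs_mult, Rabs_mult, Rabs_Ropp.
    rewrite (Rabs_pos_eq (/ 2)) by lra. rewrite (Rabs_pos_eq (r' / r)) by (apply Rmult_le_pos; [lra| apply Rlt_le, Rinv_0_lt_compat; lra]).
    assert (r' / r <= 1) by (apply Rmult_le_reg_r with r; [lra|]; unfold Rdiv; rewrite Rmult_assoc, Rinv_l by lra; lra).
    assert (0 <= r' / r) by (apply Rmult_le_pos; [lra| apply Rlt_le, Rinv_0_lt_compat; lra]).
    pose proof (Rabs_pos (r * r * be - 2 * Fp * D)).
    assert (r' / r * Rabs (r * r * be - 2 * Fp * D) <= 1 * (24 * K * D * D)) by (apply Rmult_le_compat; lra).
    nra. }
  assert (B5 : Rabs e5 <= 98 * K * K * (D * D)).
  { unfold e5. rewrite !Rabs_mult, Rabs_Ropp.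
    rewrite (Rabs_pos_eq (/ 2)), (Rabs_pos_eq r), (Rabs_pos_eq r') by lra.
    assert (r * r' * Rabs (sb - be) <= r * r * (be * be)).
    { apply Rmult_le_compat; try nra. apply Rabs_pos. }
    nra. }
  assert (B6 : Rabs e6 <= 7 / 2 * K * W2).
  { unfold e6. rewrite Rabs_mult, Rabs_mult, Rabs_mult, Rabs_mult.
    rewrite (Rabs_pos_eq (/ 2)), (Rabs_pos_eq r), (Rabs_pos_eq r'), (Rabs_pos_eq (1 - d)) by lra.
    assert (Rabs sb <= 7 * K) by lra.
    assert (r * r' * (1 - d) <= r * r * (1 - d)) by (apply Rmult_le_compat_r; [lra|]; apply Rmult_le_compat_l; lra).
    assert (Rabs sb * (r * r' * (1 - d)) <= 7 * K * W2).
    { apply Rmult_le_compat; [apply Rabs_pos| apply Rmult_le_pos; nra| lra| lra]. }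
    nra. }
  assert (HE2 : Rabs (T - / 2 * r * r' * X) <= (35 / 2 * K + 147 * K * K) * W2).
  { rewrite HE. 
    assert (Rabs (e1 + e2 + e3 + e4 + e5 + e6) <= Rabs e1 + Rabs e2 + Rabs e3 + Rabs e4 + Rabs e5 + Rabs e6).
    { repeat (eapply Rle_trans; [apply Rabs_triang| apply Rplus_le_compat_r]). lra. }
    assert (K * (D * D) <= K * W2) by (apply Rmult_le_compat_l; lra).
    assert (K * K * (D * D) <= K * K * W2) by (apply Rmult_le_compat_l; nra).
    nra. }
  assert (HW0 : 0 <= W2) by nra.
  assert (Hconst1 : (35 / 2 * K + 147 * K * K) * W2 <= 500 * (1 + K) ^ 2 * W2) by (apply Rmult_le_compat_r; nra).
  assert (Hconst2 : 2 * ((35 / 2 * K + 147 * K * K) * W2) + (4 + 392 * K * K) * W2 / 2 <= 500 * (1 + K) ^ 2 * W2).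
  { replace (2 * ((35 / 2 * K + 147 * K * K) * W2) + (4 + 392 * K * K) * W2 / 2) with ((35 * K + 490 * K * K + 2) * W2) by field.
    apply Rmult_le_compat_r; nra. }
  assert (HrX : Rabs (/ 2 * r * r' * X) <= / 2 * r * r' * c).
  { rewrite Rabs_mult, (Rabs_pos_eq (/ 2 * r * r')) by nra. apply Rmult_le_compat_l; nra. }
  assert (Hrc : / 2 * r * r' * c <= r' * r' * c).
  { apply Rmult_le_compat_r; [lra|]. nra. }
  split.
  - replace T with ((T - / 2 * r * r' * X) + / 2 * r * r' * X) by ring.
    eapply Rle_trans; [apply Rabs_triang|]. lra.
  - assert (H1 : r' * r' * c <= r' * r' * Rabs X + r' * r' * (c * c) / 2).
    { replace (r' * r' * Rabs X + r' * r' * (c * c) / 2) with (r' * r' * (Rabs X + c * c / 2)) by field.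
      apply Rmult_le_compat_l; nra. }
    assert (H2 : r' * r' * Rabs X <= 2 * Rabs (/ 2 * r * r' * X)).
    { rewrite Rabs_mult, (Rabs_pos_eq (/ 2 * r * r')) by nra.
      replace (2 * (/ 2 * r * r' * Rabs X)) with (r * r' * Rabs X) by field.
      apply Rmult_le_compat_r; [apply Rabs_pos|]. nra. }
    assert (H3 : Rabs (/ 2 * r * r' * X) <= Rabs T + Rabs (T - / 2 * r * r' * X)).
    { replace (/ 2 * r * r' * X) with (T - (T - / 2 * r * r' * X)) at 1 by ring.
      eapply Rle_trans; [apply Rabs_triang|]. rewrite Rabs_Ropp. lra. }
    lra.
Qed.

Lemma near_wrap (K r r' a b a' b' g0 g1 F0 F1 Fp : R) :
  0 <= K -> 0 < r' -> r' <= r -> r <= 2 * r' ->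
  a * a + b * b = 1 -> a' * a' + b' * b' = 1 ->
  Rabs (F0 - F1 - Fp * (r - r')) <= K * (r - r') * (r - r') ->
  Rabs Fp <= K * r ->
  Rabs (r * r * (g0 - g1) - 2 * Fp * (r - r')) <= 24 * K * (r - r') * (r - r') ->
  Rabs (F0 - F1 + / 2 * (r * a * (r' * b') - r' * a' * (r * b)))
    <= r' * r' * sqrt (dist2 (om a b g0) (om a' b' g1))
       + 500 * (1 + K) ^ 2 * ((r * a - r' * a') * (r * a - r' * a') + (r * b - r' * b') * (r * b - r' * b')) /\
  r' * r' * sqrt (dist2 (om a b g0) (om a' b' g1))
    <= 2 * Rabs (F0 - F1 + / 2 * (r * a * (r' * b') - r' * a' * (r * b)))
       + 500 * (1 + K) ^ 2 * ((r * a - r' * a') * (r * a - r' * a') + (r * b - r' * b') * (r * b - r' * b')).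
Proof.
  intros HK Hr' Hrr Hr2 Hu Hu' HF HFp Hg.
  set (s := a * b' - a' * b). set (d := a * a' + b * b').
  set (be := g0 - g1).
  assert (Hsd : s * s + d * d = 1).
  { unfold s, d. replace ((a * b' - a' * b) * (a * b' - a' * b) + (a * a' + b * b') * (a * a' + b * b'))
      with ((a * a + b * b) * (a' * a' + b' * b')) by ring. rewrite Hu, Hu'. ring. }
  assert (Hcs : cos be * cos be + sin be * sin be = 1).
  { pose proof (sin2_cos2 be). unfold Rsqr in H. lra. }
  assert (HW : (r * a - r' * a') * (r * a - r' * a') + (r * b - r' * b') * (r * b - r' * b')
               = (r - r') * (r - r') + 2 * r * r' * (1 - d)).
  { unfold d. replace ((r * a - r' * a') * (r * a - r' * a') + (r * b - r' * b') * (r * b - r' * b'))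
      with (r * r * (a * a + b * b) + r' * r' * (a' * a' + b' * b') - 2 * r * r' * (a * a' + b * b')) by ring.
    rewrite Hu, Hu'. ring. }
  assert (Hc2 : sqrt (dist2 (om a b g0) (om a' b' g1)) * sqrt (dist2 (om a b g0) (om a' b' g1))
                = 2 - 2 * (cos be * d - sin be * s)).
  { rewrite sqrt_sqrt by apply dist2_nonneg. unfold dist2, om, be, s, d; simpl.
    rewrite cos_minus, sin_minus.
    pose proof (sin2_cos2 g0). pose proof (sin2_cos2 g1). unfold Rsqr in *.
    replace 2 with (1 + 1) at 1 by ring.
    rewrite <- Hu at 1. rewrite <- Hu' at 1.
    replace (a * a + b * b) with ((a * a + b * b) * (sin g0 * sin g0 + cos g0 * cos g0)) at 1 by (rewrite H; ring).
    replace (a' * a' + b' * b') with ((a' * a' + b' * b') * (sin g1 * sin g1 + cos g1 * cos g1)) at 1 by (rewrite H0; ring).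
    ring. }
  assert (HT : F0 - F1 + / 2 * (r * a * (r' * b') - r' * a' * (r * b)) = F0 - F1 + / 2 * r * r' * s) by (unfold s; ring).
  rewrite HT, HW.
  pose proof (one_minus_cos be). pose proof (sin_minus_x be). pose proof (sin_abs_le be).
  apply (core_alg K r r' s d (cos be) (sin be) be _ (cos be * s + sin be * d) F0 F1 Fp); auto.
  apply sqrt_pos.
Qed.

Lemma sumsq_nonneg n u v : 0 <= sumsq n u v.
Proof. induction n; simpl; [lra|]. pose proof (pow2_ge_0 (u n - v n)). lra. Qed.

Lemma sumsq_mono n k u v : sumsq n u v <= sumsq (n + k) u v.
Proof.
  induction k. - rewrite Nat.add_0_r; lra.
  - rewrite Nat.add_succ_r. simpl. pose proof (pow2_ge_0 (u (n + k)%nat - v (n + k)%nat)). lra.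
Qed.

Lemma sumsq_two i j n u v : (i < j)%nat -> (j < n)%nat ->
  (u i - v i) * (u i - v i) + (u j - v j) * (u j - v j) <= sumsq n u v.
Proof.
  intros Hij Hjn.
  assert (A : (u i - v i) ^ 2 <= sumsq j u v).
  { pose proof (sumsq_mono (S i) (j - S i) u v). replace (S i + (j - S i))%nat with j in H by lia.
    simpl in H. pose proof (sumsq_nonneg i u v). lra. }
  pose proof (sumsq_mono (S j) (n - S j) u v). replace (S j + (n - S j))%nat with n in H by lia.
  simpl in H. simpl in A. lra.
Qed.

Fixpoint sabs (n : nat) (u v : nat -> R) : R :=
  match n with O => 0 | S m => sabs m u v + Rabs (u m - v m) end.

Lemma sabs_S n u v : sabs (S n) u v = sabs n u v + Rabs (u n - v n).
Proof. reflexivity. Qed.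

Lemma sqrt_sumsq_le n u v : sqrt (sumsq n u v) <= sabs n u v.
Proof.
  induction n; simpl. - rewrite sqrt_0; lra.
  - pose proof (sumsq_nonneg n u v). pose proof (sqrt_pos (sumsq n u v)).
    pose proof (Rabs_pos (u n - v n)).
    rewrite <- (sqrt_square (sabs n u v + Rabs (u n - v n))) by lra.
    apply sqrt_le_1_alt.
    assert ((u n - v n) ^ 2 = Rabs (u n - v n) * Rabs (u n - v n)) by (rewrite <- Rabs_mult, Rabs_pos_eq by (pose proof (Rle_0_sqr (u n - v n)); unfold Rsqr in *; lra); ring).
    pose proof (sqrt_sqrt (sumsq n u v) H).
    nra.
Qed.

Lemma sabs_blocks m u v B : (forall b, (b < m)%nat ->
    Rabs (u (2 + 2 * b)%nat - v (2 + 2 * b)%nat) + Rabs (u (3 + 2 * b)%nat - v (3 + 2 * b)%nat) <= B) ->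
  sabs (2 + 2 * m) u v <= Rabs (u 0%nat - v 0%nat) + Rabs (u 1%nat - v 1%nat) + INR m * B.
Proof.
  induction m; intro H.
  - simpl. lra.
  - replace (2 + 2 * S m)%nat with (S (S (2 + 2 * m))) by lia. rewrite !sabs_S.
    rewrite S_INR. specialize (IHm (fun b Hb => H b ltac:(lia))).
    specialize (H m ltac:(lia)). replace (S (2 + 2 * m)) with (3 + 2 * m)%nat by lia. lra.
Qed.

Lemma sumsq_sym n u v : sumsq n u v = sumsq n v u.
Proof. induction n; simpl; auto. rewrite IHn. f_equal. ring. Qed.

Lemma euclid_sym n u v : euclid_dist n u v = euclid_dist n v u.
Proof. unfold euclid_dist. rewrite sumsq_sym. reflexivity. Qed.

Lemma dH_sym p q : dH p q = dH q p.
Proof.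
  destruct p as [[x y] z]; destruct q as [[x' y'] z']. unfold dH.
  rewrite (Rabs_minus_sym x), (Rabs_minus_sym y).
  replace (z' - z + / 2 * (x' * y - x * y')) with (- (z - z' + / 2 * (x * y' - x' * y))) by ring.
  rewrite Rabs_Ropp. reflexivity.
Qed.

Lemma sqrt_add_le a b : 0 <= a -> 0 <= b -> sqrt (a + b) <= sqrt a + sqrt b.
Proof.
  intros Ha Hb. pose proof (sqrt_pos a). pose proof (sqrt_pos b).
  rewrite <- (sqrt_square (sqrt a + sqrt b)) by lra. apply sqrt_le_1_alt.
  pose proof (sqrt_sqrt a Ha). pose proof (sqrt_sqrt b Hb). nra.
Qed.

Definition omg (F' : R -> R) (x y : R) : R * R :=
  let r := sqrt (x * x + y * y) in om (x / r) (y / r) (Gfun F' r).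

Definition femb (F' : R -> R) (p : point) (i : nat) : R :=
  let '(x, y, _) := p in
  match i with
  | O => x
  | S O => y
  | S (S m) => sqrt (x * x + y * y) *
      (if Nat.even m then Pb (Nat.div2 m) (omg F' x y) else Qb (Nat.div2 m) (omg F' x y))
  end.

Lemma femb_SS F' x y z m : femb F' (x, y, z) (S (S m)) = sqrt (x * x + y * y) *
      (if Nat.even m then Pb (Nat.div2 m) (omg F' x y) else Qb (Nat.div2 m) (omg F' x y)).
Proof. reflexivity. Qed.

Lemma femb_P F' x y z b : femb F' (x, y, z) (2 + 2 * b)%nat = sqrt (x * x + y * y) * Pb b (omg F' x y).
Proof.
  replace (2 + 2 * b)%nat with (S (S (2 * b))) by lia. rewrite femb_SS.
  rewrite Nat.even_mul, Nat.div2_double. reflexivity.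
Qed.

Lemma femb_Q F' x y z b : femb F' (x, y, z) (3 + 2 * b)%nat = sqrt (x * x + y * y) * Qb b (omg F' x y).
Proof.
  replace (3 + 2 * b)%nat with (S (S (S (2 * b)))) by lia. rewrite femb_SS.
  rewrite Nat.even_succ, Nat.odd_mul, Nat.div2_succ_double. reflexivity.
Qed.

Lemma omg_unit F' x y : 0 < sqrt (x * x + y * y) -> nrm2 (omg F' x y) = 1.
Proof.
  intro Hr. unfold omg, om, nrm2. simpl.
  set (r := sqrt (x * x + y * y)) in *. set (g := Gfun F' r).
  pose proof (sin2_cos2 g). unfold Rsqr in H.
  assert (Hr2 : r * r = x * x + y * y) by (apply sqrt_sqrt; nra).
  replace ((x / r * cos g + y / r * sin g) * (x / r * cos g + y / r * sin g) +
    (- (x / r) * sin g + y / r * cos g) * (- (x / r) * sin g + y / r * cos g))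
    with ((x * x + y * y) / (r * r) * (sin g * sin g + cos g * cos g)) by (field; lra).
  rewrite H, <- Hr2. field. lra.
Qed.

Lemma rP_bound F' x y b : Rabs (sqrt (x * x + y * y) * Pb b (omg F' x y)) <= 3 * sqrt (x * x + y * y)
  /\ Rabs (sqrt (x * x + y * y) * Qb b (omg F' x y)) <= 3 * sqrt (x * x + y * y).
Proof.
  pose proof (sqrt_pos (x * x + y * y)).
  destruct (Req_dec (sqrt (x * x + y * y)) 0) as [E|E].
  - rewrite E, !Rmult_0_l, Rabs_R0. lra.
  - pose proof (omg_unit F' x y ltac:(lra)).
    rewrite !Rabs_mult, !(Rabs_pos_eq (sqrt _)) by lra.
    destruct (termP_bound b _ H0). destruct (termQ_bound b _ H0).
    split; rewrite Rmult_comm; apply Rmult_le_compat_r; lra.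
Qed.

Section Main.
Variables (F F' : R -> R) (K : R).
Hypothesis Hd : forall t, 0 <= t -> has_deriv_nonneg F t (F' t).
Hypothesis HK : 0 <= K.
Hypothesis HL : forall s t, 0 <= s -> 0 <= t -> Rabs (F' s - F' t) <= K * Rabs (s - t).
Hypothesis HF0 : F' 0 = 0.

Definition SC := sqrt (500 * (1 + K) ^ 2).
Definition LL := 200000 * (1 + K + SC).

Lemma SC_pos : 0 <= SC.
Proof. apply sqrt_pos. Qed.

Lemma geom_facts x y x' y' :
  let r := sqrt (x * x + y * y) in let r' := sqrt (x' * x' + y' * y') in
  let W := N2 (x - x') (y - y') in
  0 <= r /\ r * r = x * x + y * y /\ 0 <= r' /\ r' * r' = x' * x' + y' * y' /\
  Rabs (r - r') <= W /\ Rabs (x * y' - x' * y) <= r * r'.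
Proof.
  intros r r' W.
  assert (Hr : r * r = x * x + y * y) by (apply sqrt_sqrt; nra).
  assert (Hr' : r' * r' = x' * x' + y' * y') by (apply sqrt_sqrt; nra).
  pose proof (sqrt_pos (x * x + y * y)) as Hr0. pose proof (sqrt_pos (x' * x' + y' * y')) as Hr0'.
  fold r in Hr0. fold r' in Hr0'.
  assert (CS1 : (x * x' + y * y') * (x * x' + y * y') <= (r * r') * (r * r')).
  { replace (r * r' * (r * r')) with ((r * r) * (r' * r')) by ring. rewrite Hr, Hr'.
    pose proof (Rle_0_sqr (x * y' - x' * y)). unfold Rsqr in H. nra. }
  assert (CS2 : (x * y' - x' * y) * (x * y' - x' * y) <= (r * r') * (r * r')).
  { replace (r * r' * (r * r')) with ((r * r) * (r' * r')) by ring. rewrite Hr, Hr'.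
    pose proof (Rle_0_sqr (x * x' + y * y')). unfold Rsqr in H. nra. }
  assert (Hrr : 0 <= r * r') by nra.
  assert (D1 : x * x' + y * y' <= r * r').
  { destruct (Rle_dec (x * x' + y * y') 0); [lra|]. nra. }
  repeat split; auto.
  - pose proof (N2_pos (x - x') (y - y')). fold W in H.
    pose proof (N2_sq (x - x') (y - y')). fold W in H0.
    apply Rabs_le. split; nra.
  - apply Rabs_le. split; nra.
Qed.

Lemma pair_bound x y z x' y' z' :
  z = F (sqrt (x * x + y * y)) -> z' = F (sqrt (x' * x' + y' * y')) ->
  sqrt (x' * x' + y' * y') <= sqrt (x * x + y * y) ->
  dH (x, y, z) (x', y', z') <= LL * euclid_dist 34 (femb F' (x, y, z)) (femb F' (x', y', z')) /\
  euclid_dist 34 (femb F' (x, y, z)) (femb F' (x', y', z')) <= LL * dH (x, y, z) (x', y', z').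
Proof.
  intros Hz Hz' Hrr.
  destruct (geom_facts x y x' y') as [Hr0 [Hr [Hr0' [Hr' [HDW Hcr]]]]].
  set (r := sqrt (x * x + y * y)) in *. set (r' := sqrt (x' * x' + y' * y')) in *.
  set (D := euclid_dist 34 (femb F' (x, y, z)) (femb F' (x', y', z'))).
  set (W := N2 (x - x') (y - y')) in *.
  set (H := Rabs (x - x') + Rabs (y - y')).
  set (T := z - z' + / 2 * (x * y' - x' * y)).
  assert (HdH : dH (x, y, z) (x', y', z') = H + sqrt (Rabs T)) by reflexivity.
  rewrite HdH.
  assert (HW0 : 0 <= W) by apply N2_pos.
  assert (HWH : W <= H) by apply N2_le_abs.
  assert (HHW : H <= 2 * W).
  { pose proof (abs_le_N2 (x - x') (y - y')). pose proof (abs_le_N2 (y - y') (x - x')).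
    rewrite N2_sym in H1. fold W in H0, H1. unfold H. lra. }
  assert (HsT : 0 <= sqrt (Rabs T)) by apply sqrt_pos.
  assert (HWD : W <= D).
  { unfold D, euclid_dist, W, N2. apply sqrt_le_1_alt.
    apply (sumsq_two 0 1 34 (femb F' (x, y, z)) (femb F' (x', y', z'))); lia. }
  assert (HVD : forall b, (b < 16)%nat ->
     N2 (r * Pb b (omg F' x y) - r' * Pb b (omg F' x' y')) (r * Qb b (omg F' x y) - r' * Qb b (omg F' x' y')) <= D).
  { intros b Hb. unfold D, euclid_dist, N2. apply sqrt_le_1_alt.
    pose proof (sumsq_two (2 + 2 * b) (3 + 2 * b) 34 (femb F' (x, y, z)) (femb F' (x', y', z')) ltac:(lia) ltac:(lia)).
    rewrite !femb_P, !femb_Q in H0. exact H0. }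
  assert (HDup : forall B, (forall b, (b < 16)%nat ->
      Rabs (r * Pb b (omg F' x y) - r' * Pb b (omg F' x' y')) + Rabs (r * Qb b (omg F' x y) - r' * Qb b (omg F' x' y')) <= B) ->
      D <= H + 16 * B).
  { intros B HB. unfold D, euclid_dist. eapply Rle_trans; [apply sqrt_sumsq_le|].
    replace 34%nat with (2 + 2 * 16)%nat by reflexivity.
    eapply Rle_trans; [apply sabs_blocks|].
    - intros b Hb. rewrite !femb_P, !femb_Q. apply HB; auto.
    - replace (INR 16) with 16 by (simpl; ring). unfold H. simpl. lra. }
  pose proof SC_pos as HSC.
  assert (HLL1 : 289 <= LL) by (unfold LL; nra).
  destruct (Rle_dec (2 * r') r) as [Hfar|Hnear].
  -
    assert (HrW : r <= 2 * W) by (rewrite Rabs_pos_eq in HDW by lra; lra).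
    assert (HT : Rabs T <= (K + 1) * (r * r)).
    { unfold T. rewrite Hz, Hz'. eapply Rle_trans; [apply Rabs_triang|].
      pose proof (F_diff F F' K Hd HK HL HF0 r' r Hr0' Hrr).
      rewrite Rabs_mult, (Rabs_pos_eq (/ 2)) by lra.
      assert (K * r * (r - r') <= K * r * r) by (apply Rmult_le_compat_l; nra).
      assert (r * r' <= r * r / 2) by nra. nra. }
    assert (HTW : sqrt (Rabs T) <= 2 * (K + 1) * W).
    { rewrite <- (sqrt_square (2 * (K + 1) * W)) by nra. apply sqrt_le_1_alt.
      assert ((K + 1) * (r * r) <= (K + 1) * (4 * (W * W))) by (apply Rmult_le_compat_l; nra).
      assert ((K + 1) * (4 * (W * W)) <= 2 * (K + 1) * W * (2 * (K + 1) * W)).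
      { replace (2 * (K + 1) * W * (2 * (K + 1) * W)) with ((K + 1) * (4 * (W * W)) * (K + 1)) by ring.
        assert (0 <= (K + 1) * (4 * (W * W))) by nra. nra. }
      lra. }
    split.
    + assert (H + sqrt (Rabs T) <= (2 * K + 4) * D).
      { assert ((2 * K + 4) * W <= (2 * K + 4) * D) by (apply Rmult_le_compat_l; lra). nra. }
      assert ((2 * K + 4) * D <= LL * D).
      { apply Rmult_le_compat_r; [lra|]. unfold LL. nra. }
      lra.
    + assert (D <= H + 16 * (18 * W)).
      { apply HDup. intros b Hb.
        destruct (rP_bound F' x y b) as [P1 Q1]. destruct (rP_bound F' x' y' b) as [P2 Q2].
        fold r in P1, Q1. fold r' in P2, Q2.
        pose proof (Rabs_triang (r * Pb b (omg F' x y)) (- (r' * Pb b (omg F' x' y')))).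
        pose proof (Rabs_triang (r * Qb b (omg F' x y)) (- (r' * Qb b (omg F' x' y')))).
        rewrite Rabs_Ropp in H0, H1. unfold Rminus. lra. }
      assert (D <= 289 * (H + sqrt (Rabs T))) by lra.
      assert (289 * (H + sqrt (Rabs T)) <= LL * (H + sqrt (Rabs T))) by (apply Rmult_le_compat_r; lra).
      lra.
  -
    apply Rnot_le_lt in Hnear.
    assert (Hr'p : 0 < r') by lra. assert (Hrp : 0 < r) by lra.
    set (a := x / r). set (b := y / r). set (a' := x' / r'). set (b' := y' / r').
    assert (Ex : x = r * a) by (unfold a; field; lra). assert (Ey : y = r * b) by (unfold b; field; lra).
    assert (Ex' : x' = r' * a') by (unfold a'; field; lra). assert (Ey' : y' = r' * b') by (unfold b'; field; lra).
    assert (Hu : a * a + b * b = 1) by (unfold a, b; field_simplify_eq; [lra| lra]).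
    assert (Hu' : a' * a' + b' * b' = 1) by (unfold a', b'; field_simplify_eq; [lra| lra]).
    assert (HF : Rabs (F r - F r' - F' r * (r - r')) <= K * (r - r') * (r - r')) by (apply (F_taylor F F' K Hd HK HL); lra).
    assert (HFp : Rabs (F' r) <= K * r) by (apply (F'_bound F' K HL HF0); lra).
    assert (Hg : Rabs (r * r * (Gfun F' r - Gfun F' r') - 2 * F' r * (r - r')) <= 24 * K * (r - r') * (r - r')).
    { pose proof (G_taylor F' K HK HL HF0 r' r Hr'p Hrr ltac:(lra)).
      replace (r * r * (Gfun F' r - Gfun F' r') - 2 * F' r * (r - r'))
        with (r * r * (Gfun F' r - Gfun F' r' - gfun F' r * (r - r'))) by (unfold gfun; field; lra).
      rewrite Rabs_mult, (Rabs_pos_eq (r * r)) by nra.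
      replace (24 * K * (r - r') * (r - r')) with (r * r * (24 * K * (r - r') * (r - r') / (r * r))) by (field; lra).
      apply Rmult_le_compat_l; nra. }
    destruct (near_wrap K r r' a b a' b' (Gfun F' r) (Gfun F' r') (F r) (F r') (F' r) HK Hr'p Hrr ltac:(lra) Hu Hu' HF HFp Hg)
      as [Hup Hlo].
    set (c := sqrt (dist2 (om a b (Gfun F' r)) (om a' b' (Gfun F' r')))) in *.
    assert (HT' : F r - F r' + / 2 * (r * a * (r' * b') - r' * a' * (r * b)) = T) by (unfold T; rewrite Hz, Hz', <- Ex, <- Ey, <- Ex', <- Ey'; reflexivity).
    assert (HW2 : (r * a - r' * a') * (r * a - r' * a') + (r * b - r' * b') * (r * b - r' * b') = W * W).
    { rewrite <- Ex, <- Ey, <- Ex', <- Ey'. unfold W. rewrite N2_sq. reflexivity. }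
    rewrite HT', HW2 in Hup, Hlo.
    assert (Hom : omg F' x y = om a b (Gfun F' r)) by reflexivity.
    assert (Hom' : omg F' x' y' = om a' b' (Gfun F' r')) by reflexivity.
    assert (Hunit : nrm2 (omg F' x y) = 1) by (apply omg_unit; fold r; lra).
    assert (Hunit' : nrm2 (omg F' x' y') = 1) by (apply omg_unit; fold r'; lra).
    assert (Hc : ck 0 (omg F' x y) (omg F' x' y') = c) by (rewrite Hom, Hom'; reflexivity).
    assert (Hc0 : 0 <= c) by apply sqrt_pos.
    assert (HsqCC : sqrt (500 * (1 + K) ^ 2 * (W * W)) = SC * W).
    { unfold SC. rewrite sqrt_mult_alt by nra. rewrite sqrt_square by lra. reflexivity. }
    assert (Hrsc : sqrt (r' * r' * c) = r' * sqrt c).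
    { rewrite sqrt_mult_alt by nra. rewrite sqrt_square by lra. reflexivity. }
    assert (HD0 : r - r' <= W) by (rewrite Rabs_pos_eq in HDW by lra; lra).
    assert (HPb : forall bb, (bb < 16)%nat -> Rabs (Pb bb (omg F' x y)) <= 3 /\ Rabs (Qb bb (omg F' x y)) <= 3).
    { intros bb _. split; [apply termP_bound| apply termQ_bound]; auto. }
    assert (Hsplit : forall P P' : R, r * P - r' * P' = r' * (P - P') + (r - r') * P) by (intros; ring).
    split.
    +
      assert (HsTu : sqrt (Rabs T) <= r' * sqrt c + SC * W).
      { rewrite <- Hrsc, <- HsqCC. eapply Rle_trans; [apply sqrt_le_1_alt; exact Hup|].
        apply sqrt_add_le; [nra| nra]. }
      assert (Hrc : r' * sqrt c <= 70 * D).
      { destruct (Req_dec c 0) as [E|E].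
        - rewrite E, sqrt_0, Rmult_0_r. pose proof (Rle_trans _ _ _ HW0 HWD). lra.
        - destruct (PQ_lower (omg F' x y) (omg F' x' y') Hunit Hunit' ltac:(rewrite Hc; lra)) as [bb [Hbb Hlow]].
          rewrite Hc in Hlow.
          specialize (HVD bb Hbb). destruct (HPb bb Hbb) as [HP HQ].
          rewrite (Hsplit (Pb bb _)), (Hsplit (Qb bb _)) in HVD.
          pose proof (N2_triang (r' * (Pb bb (omg F' x y) - Pb bb (omg F' x' y')) + (r - r') * Pb bb (omg F' x y))
                                (r' * (Qb bb (omg F' x y) - Qb bb (omg F' x' y')) + (r - r') * Qb bb (omg F' x y))
                                (- ((r - r') * Pb bb (omg F' x y))) (- ((r - r') * Qb bb (omg F' x y)))) as Tr.
          rewrite !Rplus_assoc, !Rplus_opp_r, !Rplus_0_r in Tr.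
          rewrite N2_scal in Tr by lra.
          pose proof (N2_le_abs (- ((r - r') * Pb bb (omg F' x y))) (- ((r - r') * Qb bb (omg F' x y)))).
          rewrite !Rabs_Ropp, !Rabs_mult, !(Rabs_pos_eq (r - r')) in H0 by lra.
          assert ((r - r') * Rabs (Pb bb (omg F' x y)) <= (r - r') * 3) by (apply Rmult_le_compat_l; lra).
          assert ((r - r') * Rabs (Qb bb (omg F' x y)) <= (r - r') * 3) by (apply Rmult_le_compat_l; lra).
          assert (r' * (sqrt c / 10) <= r' * N2 (Pb bb (omg F' x y) - Pb bb (omg F' x' y')) (Qb bb (omg F' x y) - Qb bb (omg F' x' y')))
            by (apply Rmult_le_compat_l; lra).
          lra. }
      assert (SC * W <= SC * D) by (apply Rmult_le_compat_l; lra).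
      assert (H + sqrt (Rabs T) <= (72 + SC) * D) by lra.
      assert ((72 + SC) * D <= LL * D).
      { apply Rmult_le_compat_r; [lra|]. unfold LL. nra. }
      lra.
    +
      assert (HrcT : r' * sqrt c <= 2 * sqrt (Rabs T) + SC * W).
      { rewrite <- Hrsc, <- HsqCC. eapply Rle_trans; [apply sqrt_le_1_alt; exact Hlo|].
        eapply Rle_trans; [apply sqrt_add_le; [pose proof (Rabs_pos T); lra| nra]|].
        rewrite sqrt_mult_alt by lra.
        assert (sqrt 2 <= 2).
        { rewrite <- (sqrt_square 2) at 2 by lra. apply sqrt_le_1_alt. lra. }
        pose proof (sqrt_pos 2). nra. }
      assert (D <= H + 16 * (4200 * (r' * sqrt c) + 6 * W)).
      { apply HDup. intros bb Hbb. destruct (HPb bb Hbb) as [HP HQ].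
        rewrite !Hsplit.
        pose proof (P_diff_upper bb _ _ Hunit Hunit' Hbb) as U1. pose proof (Q_diff_upper bb _ _ Hunit Hunit' Hbb) as U2.
        rewrite Hc in U1, U2.
        pose proof (Rabs_triang (r' * (Pb bb (omg F' x y) - Pb bb (omg F' x' y'))) ((r - r') * Pb bb (omg F' x y))).
        pose proof (Rabs_triang (r' * (Qb bb (omg F' x y) - Qb bb (omg F' x' y'))) ((r - r') * Qb bb (omg F' x y))).
        rewrite !Rabs_mult, !(Rabs_pos_eq r'), !(Rabs_pos_eq (r - r')) in H0, H1 by lra.
        assert (r' * Rabs (Pb bb (omg F' x y) - Pb bb (omg F' x' y')) <= r' * (2100 * sqrt c)) by (apply Rmult_le_compat_l; lra).
        assert (r' * Rabs (Qb bb (omg F' x y) - Qb bb (omg F' x' y')) <= r' * (2100 * sqrt c)) by (apply Rmult_le_compat_l; lra).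
        assert ((r - r') * Rabs (Pb bb (omg F' x y)) <= W * 3) by (apply Rmult_le_compat; try lra; apply Rabs_pos).
        assert ((r - r') * Rabs (Qb bb (omg F' x y)) <= W * 3) by (apply Rmult_le_compat; try lra; apply Rabs_pos).
        lra. }
      assert (SC * W <= SC * (H + sqrt (Rabs T))) by (apply Rmult_le_compat_l; lra).
      assert (D <= (134497 + 67200 * SC) * (H + sqrt (Rabs T))) by nra.
      assert ((134497 + 67200 * SC) * (H + sqrt (Rabs T)) <= LL * (H + sqrt (Rabs T))).
      { apply Rmult_le_compat_r; [lra|]. unfold LL. nra. }
      lra.
Qed.

End Main.


Theorem corollary5p2 (F F' : R -> R) :
  C11_nonneg F F' -> F' 0 = 0 ->
  forall A : point -> Prop,
    (forall p, A p -> Sigma F p) -> dH_compact A ->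
    exists n : nat, biLip_embeds A n.
Proof.
  intros [Hd [K [HK HL]]] HF0 A HA _.
  exists 34%nat. exists (LL K), (femb F').
  pose proof (SC_pos K) as HSC.
  assert (HL1 : 1 <= LL K) by (unfold LL; nra).
  split; [exact HL1|].
  intros p q Hp Hq. apply HA in Hp. apply HA in Hq.
  destruct p as [[x y] z]. destruct q as [[x' y'] z']. simpl in Hp, Hq.
  assert (Hinv : forall u v, u <= LL K * v -> / LL K * u <= v).
  { intros u v Huv. apply Rmult_le_reg_l with (LL K); [lra|].
    rewrite <- Rmult_assoc, Rinv_r, Rmult_1_l by lra. exact Huv. }
  destruct (Rle_dec (sqrt (x' * x' + y' * y')) (sqrt (x * x + y * y))) as [Hle|Hgt].
  - destruct (pair_bound F F' K Hd HK HL HF0 x y z x' y' z' Hp Hq Hle) as [H1 H2].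
    split; [apply Hinv; exact H1| exact H2].
  - destruct (pair_bound F F' K Hd HK HL HF0 x' y' z' x y z Hq Hp ltac:(lra)) as [H1 H2].
    rewrite (euclid_sym _ (femb F' (x', y', z'))) in H1, H2.
    rewrite (dH_sym (x', y', z')) in H1, H2.
    split; [apply Hinv; exact H1| exact H2].
Qed.
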